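(* Suppose there exist a measurable set $\widetilde X\subset X$ with $\mu(\widetilde X)>0$ and a measurable function $A:\widetilde X\to(0,+\infty)$ such that for every $\tau\in\widetilde X$: (i) $g(u,\tau)=0$ if and only if $u=0$; (ii) $K(s,\tau)>0$ for all $s\in(-A(\tau),A(\tau))$. If $\phi$ is a solution of (E) with $\phi(0)=0$, then $\phi(t)=0$ for all $t\in\mathbb{R}$.
   Context: Let $(X,\mu)$ be a finite measure space. Let $K:\mathbb{R}\times X\to[0,\infty)$ be measurable and integrable on $\mathbb{R}\times X$, with $\int_{\mathbb{R}}K(s,\tau)\,ds>0$ for every $\tau$. Let $g:[0,\infty)\times X\to[0,\infty)$ be measurable, with $g(0,\tau)=0$, $g(\cdot,\tau)$ continuous for each $\tau$, and the derivative $g'(0,\tau)$ at $0$ existing and positive. Equation (E): $\phi(t)=\int_X d\mu(\tau)\int_{\mathbb{R}}K(s,\tau)\,g(\phi(t-s),\tau)\,ds$, $t\in\mathbb{R}$; a solution is a continuous function $\phi:\mathbb{R}\to[0,\infty)$ satisfying (E) for all $t$. *)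

(* Defs.v *)
From HB Require Import structures.
From mathcomp Require Import all_boot all_order all_algebra.
From mathcomp Require Import all_classical all_reals all_analysis.
Set Implicit Arguments. Unset Strict Implicit. Unset Printing Implicit Defensive.
Import Order.TTheory GRing.Theory Num.Theory.
Import numFieldNormedType.Exports.
Local Open Scope classical_set_scope.
Local Open Scope ring_scope.

(* Right-hand side of equation (E) at time t, as an (iterated, nonnegative)
   Lebesgue integral valued in the extended reals:
   \int_X dmu(tau) \int_R K(s,tau) g(phi(t-s),tau) ds. *)
Definition E_rhs {d : measure_display} {R : realType} {X : measurableType d}
  (mu : set X -> \bar R) (K : R * X -> R) (g : R -> X -> R) (phi : R -> R)
  (t : R) : \bar R :=
  (\int[mu]_(tau in [set: X])
     \int[lebesgue_measure]_(s in [set: R]) (K (s, tau) * g (phi (t - s)) tau)%:E)%E.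

Definition is_solution {d : measure_display} {R : realType} {X : measurableType d}
  (mu : set X -> \bar R) (K : R * X -> R) (g : R -> X -> R) (phi : R -> R) : Prop :=
  continuous phi /\ (forall t, 0 <= phi t) /\
  (forall t, (phi t)%:E = E_rhs mu K g phi t).

(* The (one-sided, since g(.,tau) lives on [0,oo)) derivative of g(.,tau) at 0
   exists and is positive. *)
Definition deriv0_pos {d : measure_display} {R : realType} {X : measurableType d}
  (g : R -> X -> R) (tau : X) : Prop :=
  exists l : R, 0 < l /\ (fun h : R => (g h tau - g 0 tau) / h) @ 0^'+ --> l.

(* Main.v *)
Require Import Defs.
From HB Require Import structures.
From mathcomp Require Import all_boot all_order all_algebra.
From mathcomp Require Import all_classical all_reals all_analysis.
From mathcomp Require Import measurable_realfun.
From mathcomp Require Import lra.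
Import Order.TTheory GRing.Theory Num.Theory.
Import numFieldNormedType.Exports.
Local Open Scope classical_set_scope.
Local Open Scope ring_scope.

Lemma stepA (d : measure_display) (R : realType) (X : measurableType d)
  (mu : {measure set X -> \bar R}) (Xt : set X) (A : X -> R) :
  measurable Xt -> (0 < mu Xt)%E -> measurable_fun Xt A ->
  (forall tau, Xt tau -> 0 < A tau) ->
  exists2 δ : R, 0 < δ & (0 < mu (Xt `&` A @^-1` [set` `]δ, +oo[%R]))%E.
Proof.
move=> mXt mu0 mA Apos.
apply: contrapT => H.
have negF k : mu.-negligible (Xt `&` A @^-1` [set` `](k.+1%:R^-1 : R), +oo[%R]).
  exists (Xt `&` A @^-1` [set` `](k.+1%:R^-1 : R), +oo[%R]); split => //.
    exact: mA.
  apply/eqP; rewrite eq_le measure_ge0 andbT leNgt; apply/negP => hlt.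
  by apply: H; exists k.+1%:R^-1.
have [N [mN N0 sub]] := negligible_bigcup negF.
have : (mu Xt <= mu N)%E.
  apply: le_measure; rewrite ?inE //.
  move=> x Xx; apply: sub.
  exists (Num.truncn (A x)^-1) => //; split => //=.
  rewrite in_itv /= andbT.
  rewrite invf_plt ?posrE ?Apos //.
  exact: truncnS_gt.
by rewrite N0 leNgt mu0.
Qed.

Lemma cont_shift (R : realType) (phi : R -> R) (t : R) :
  continuous phi -> continuous (fun s => phi (t - s)).
Proof.
move=> cphi s; apply: continuous_comp; last exact: cphi.
by apply: cvgB; [exact: cvg_cst | exact: cvg_id].
Qed.
Lemma stepC (R : realType) (phi : R -> R) (k h : R -> R) (a t0 : R) :
  continuous phi -> (forall t, 0 <= phi t) -> 0 < a ->
  (forall s, 0 <= k s) -> (forall s, - a < s < a -> 0 < k s) ->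
  (forall u, 0 <= u -> 0 <= h u) -> (forall u, 0 <= u -> (h u = 0 <-> u = 0)) ->
  measurable_fun [set: R] (EFin \o (fun s => k s * h (phi (t0 - s)))) ->
  (\int[lebesgue_measure]_(s in [set: R]) (k s * h (phi (t0 - s)))%:E = 0)%E ->
  forall s, - a < s < a -> phi (t0 - s) = 0.
Proof.
move=> cphi phi0 a0 k0 kpos h0 hz mf int0.
have : (\int[lebesgue_measure]_(s in [set: R]) `|(EFin \o (fun s => k s * h (phi (t0 - s)))%R) s|)%E = 0.
  rewrite -int0; apply: eq_integral => s _ /=.
  by rewrite ger0_norm // mulr_ge0 // h0.
move=> Hint; have [N [mN N0 sub]] := (@ae_eq_integral_abs _ _ _ (@lebesgue_measure R) setT measurableT _ mf).1 Hint.
move=> s hs; apply: contrapT => hne.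
have ppos : 0 < phi (t0 - s) by rewrite lt_neqAle eq_sym phi0 andbT; apply/eqP.
have Hnb0 : \forall y \near s, 0 < phi (t0 - y) by apply: (cvgr_gt _ (@cont_shift _ _ t0 cphi s) _ ppos).
have [e /= e0 He] := (nbhs_ballP _ _).1 Hnb0.
have sa : `|s| < a by rewrite ltr_norml.
pose r := Num.min e (a - `|s|).
have r0 : 0 < r by rewrite lt_min e0 subr_gt0 sa.
have hr1 : r <= e by rewrite /r ge_min lexx.
have hr2 : r <= a - `|s| by rewrite /r ge_min lexx orbT.
have sb1 := ler_norm s.
have sb2 : - s <= `|s| by rewrite -normrN ler_norm.
have sub2 : [set` `](s - r), (s + r)[%R] `<=` N.
  move=> y /=; rewrite in_itv /= => /andP [h1 h2].
  have ys : ball s e y.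
    rewrite -ball_normE /ball_ /= ltr_norml; apply/andP; split; lra.
  have := He _ ys => /= py.
  apply: sub => /= /(_ I) /eqP; apply/negP.
  rewrite mulf_neq0 //.
    by rewrite gt_eqF // kpos //; apply/andP; split; lra.
  apply/negP => /eqP /(hz _ (phi0 _)) p0.
  by rewrite p0 ltxx in py.
have hle : (@lebesgue_measure R [set` `](s - r), (s + r)[%R] <= @lebesgue_measure R N)%E.
  by apply: le_measure => //; rewrite inE //; exact: measurable_itv.
move: hle; rewrite N0 lebesgue_measure_itv /=.
have -> : ((s - r)%:E < (s + r)%:E)%E by rewrite lte_fin; lra.
rewrite -EFinD lee_fin; lra.
Qed.

Lemma meas_F (d : measure_display) (R : realType) (X : measurableType d)
  (K : R * X -> R) (g : R -> X -> R) (phi : R -> R) (t : R) :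
  measurable_fun [set: R * X] K ->
  measurable_fun ([set u : R | 0 <= u] `*` [set: X]) (fun p => g p.1 p.2) ->
  continuous phi -> (forall t, 0 <= phi t) ->
  measurable_fun [set: R * X] (EFin \o (fun p : R * X => K p * g (phi (t - p.1)) p.2)).
Proof.
move=> mK mg cphi phi0.
apply/measurable_EFinP; apply: measurable_funM => //.
have -> : (fun p : R * X => g (phi (t - p.1)) p.2) =
   (fun q : R * X => g q.1 q.2) \o (fun p : R * X => (phi (t - p.1), p.2)) by [].
apply: (measurable_comp (F := [set u : R | 0 <= u] `*` [set: X])) => //.
- apply: measurableX => //.
  rewrite (_ : [set u : R | 0 <= u] = [set` `[0%R, +oo[%R]); first exact: measurable_itv.
  by apply/seteqP; split => u /=; rewrite in_itv /= andbT.
- by move=> _ [p _ <-]; split => //=.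
- apply: measurable_fun_pair; last exact: measurable_snd.
  have h1 := continuous_measurable_fun (@cont_shift _ _ t cphi).
  have h2 := @measurable_fst _ _ R X.
  have h3 := measurableT_comp h1 h2.
  exact: h3.
Qed.

Theorem lemma1p2 (d : measure_display) (R : realType) (X : measurableType d)
  (mu : {finite_measure set X -> \bar R})
  (K : R * X -> R) (g : R -> X -> R)
  (* standing assumptions on K *)
  (HKmeas : measurable_fun [set: R * X] K)
  (HK0 : forall p, 0 <= K p)
  (HKint : ((@lebesgue_measure R) \x mu)%E.-integrable [set: R * X] (fun p => (K p)%:E))
  (HKpos : forall tau, (0 < \int[lebesgue_measure]_(s in [set: R]) (K (s, tau))%:E)%E)
  (* standing assumptions on g (g is only relevant on [0,oo) x X) *)
  (Hgmeas : measurable_fun ([set u : R | 0 <= u] `*` [set: X]) (fun p => g p.1 p.2))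
  (Hg0 : forall u tau, 0 <= u -> 0 <= g u tau)
  (Hgzero : forall tau, g 0 tau = 0)
  (Hgcont : forall tau, {within [set u : R | 0 <= u], continuous (fun u => g u tau)})
  (Hgder : forall tau, deriv0_pos g tau)
  (* hypotheses of the lemma *)
  (Xt : set X) (HXt : measurable Xt) (HmuXt : (0 < mu Xt)%E)
  (A : X -> R) (HAmeas : measurable_fun Xt A) (HApos : forall tau, Xt tau -> 0 < A tau)
  (Hi : forall tau, Xt tau -> forall u, 0 <= u -> (g u tau = 0 <-> u = 0))
  (Hii : forall tau, Xt tau -> forall s, - A tau < s < A tau -> 0 < K (s, tau))
  (phi : R -> R) (Hphi : is_solution mu K g phi) (Hphi0 : phi 0 = 0) :
  forall t, phi t = 0.
Proof.
have [cphi [phi0 Heq]] := Hphi.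
have [δ δ0 Ypos] := @stepA _ _ _ mu Xt A HXt HmuXt HAmeas HApos.
have key : forall t0, phi t0 = 0 -> forall s, - δ < s < δ -> phi (t0 - s) = 0.
  move=> t0 pt0.
  pose F := EFin \o (fun p : R * X => K p * g (phi (t0 - p.1)) p.2).
  have mF : measurable_fun [set: R * X] F := @meas_F _ _ _ K g phi t0 HKmeas Hgmeas cphi phi0.
  have F0 : forall p, (0 <= F p)%E.
    by move=> p; rewrite lee_fin mulr_ge0 // Hg0.
  have mG := @measurable_fun_fubini_tonelli_G _ _ _ _ _ (@lebesgue_measure R) F mF F0.
  have G0 : forall tau, (0 <= fubini_G (@lebesgue_measure R) F tau)%E.
    by move=> tau; apply: integral_ge0 => s _; exact: F0.
  have HI : (\int[mu]_(tau in [set: X]) `|fubini_G (@lebesgue_measure R) F tau|)%E = 0.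
    have := Heq t0; rewrite pt0 /E_rhs => H0.
    apply: (eq_trans _ (esym H0)).
    by apply: eq_integral => tau _; rewrite gee0_abs.
  have [N [mN N0 sub]] := (@ae_eq_integral_abs _ _ _ mu setT measurableT _ mG).1 HI.
  have [tau [Xtau Atau] Gtau] : exists2 tau, (Xt `&` A @^-1` [set` `]δ, +oo[%R]) tau &
      fubini_G (@lebesgue_measure R) F tau = 0.
    apply: contrapT => Hn.
    have hsub : Xt `&` A @^-1` [set` `]δ, +oo[%R] `<=` N.
      move=> tau Ytau; apply: sub => /= Hz; apply: Hn; exists tau => //; exact: Hz.
    have : (mu (Xt `&` A @^-1` [set` `]δ, +oo[%R]) <= mu N)%E.
      by apply: le_measure => //; rewrite inE //; exact: HAmeas.
    by rewrite N0 leNgt Ypos.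
  move: Atau; rewrite /= in_itv /= andbT => Atau.
  have Apos := HApos _ Xtau.
  move=> s hs.
  apply: (@stepC R phi (fun s => K (s, tau)) (fun u => g u tau) (A tau) t0 cphi phi0 Apos).
  - by move=> ?; exact: HK0.
  - exact: Hii.
  - by move=> u u0; exact: Hg0.
  - exact: Hi.
  - exact: (measurable_fun_pair1 tau mF).
  - exact: Gtau.
  - by move: hs => /andP [h1 h2]; apply/andP; split; lra.
have P : forall n : nat, forall t, `|t| <= (δ / 2) *+ n.+1 -> phi t = 0.
  elim=> [|n IH] t ht.
    rewrite mulr1n in ht.
    have -> : t = 0 - (- t) by rewrite sub0r opprK.
    apply: key => //.
    have := ler_norm t; have : - t <= `|t| by rewrite -normrN ler_norm.
    move=> h1 h2; apply/andP; split; lra.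
  have hm0 : 0 <= (δ / 2) *+ n by rewrite mulrn_wge0 // divr_ge0 // ltW.
  have hm : δ / 2 <= (δ / 2) *+ n.+1.
    rewrite [_ *+ n.+1]mulrS; lra.
  have := ler_norm t; have : - t <= `|t| by rewrite -normrN ler_norm.
  move=> h1 h2.
  rewrite mulrSr in ht.
  have [hle|hlt] := leP `|t| ((δ / 2) *+ n.+1); first exact: IH.
  have [tpos|tneg] := leP 0 t.
    have -> : t = (t - δ / 2) - (- (δ / 2)) by rewrite opprK subrK.
    apply: key; last by apply/andP; split; lra.
    apply: IH; rewrite ler_norml; apply/andP; split.
      rewrite ger0_norm // in hlt; lra.
    rewrite ger0_norm // in ht; lra.
  have -> : t = (t + δ / 2) - (δ / 2) by rewrite addrK.
  apply: key; last by apply/andP; split; lra.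
  apply: IH; rewrite ler_norml; apply/andP; split.
    rewrite ltr0_norm // in ht; lra.
  rewrite ltr0_norm // in hlt; lra.
move=> t; apply: (P (Num.truncn (`|t| / (δ / 2)))).
have d2 : 0 < δ / 2 by rewrite divr_gt0.
apply: ltW; rewrite -mulr_natr -ltr_pdivrMl // mulrC.
exact: truncnS_gt.
Qed.
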